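(* Fix integers $t\geq 1$ and $r\geq 1$. Then, as $m\to\infty$ (with $m\geq r$), \[ R_t(r,m) \geq \left(1-\frac{1}{2^t}\right)2^m-\frac{\sqrt{2t(2^t-1) \ln 2}}{2^t\sqrt{r!}}\, m^{r/2}\,2^{m/2}(1+o(1)). \]
   Context: For a $t\times n$ matrix $\mathbf{v}$ over $\mathbb{F}_q$ with rows $\overline{v}_1,\dots,\overline{v}_t$, its $t$-weight is $\mathrm{wt}^{(t)}(\mathbf{v})=\left|\bigcup_{i=1}^t \mathrm{supp}(\overline{v}_i)\right|$, and $d^{(t)}(\mathbf{u},\mathbf{v})=\mathrm{wt}^{(t)}(\mathbf{u}-\mathbf{v})$. For a linear code $C\subseteq\mathbb{F}_q^n$ and $t\in\mathbb{N}$, let $C^t$ be the set of $t\times n$ matrices all of whose rows lie in $C$. The $t$-th generalized covering radius $R_t(C)$ is the smallest integer $\rho$ such that for every $\mathbf{v}\in\mathbb{F}_q^{t\times n}$ there is $\mathbf{c}\in C^t$ with $d^{(t)}(\mathbf{v},\mathbf{c})\leq \rho$. Binary Reed–Muller codes $\mathrm{RM}(r,m)\subseteq\mathbb{F}_2^{2^m}$ ($0\le r\le m$) are defined recursively: $\mathrm{RM}(0,m)=\{\overline{0},\overline{1}\}$, $\mathrm{RM}(m,m)=\mathbb{F}_2^{2^m}$, and for $1\leq r\leq m-1$, $\mathrm{RM}(r,m)=\{(\overline{u},\overline{u}+\overline{v}) : \overline{u}\in \mathrm{RM}(r,m-1),\ \overline{v}\in\mathrm{RM}(r-1,m-1)\}$.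 It is a linear code of length $2^m$ and dimension $\sum_{i=0}^r\binom{m}{i}$. Write $R_t(r,m)=R_t(\mathrm{RM}(r,m))$. *)

(* Defs.v *)
From mathcomp Require Import all_boot.
Set Implicit Arguments. Unset Strict Implicit. Unset Printing Implicit Defensive.

(* Binary words of length n: n.-tuple bool (bool = F_2, addition = xor). *)
Notation word n := (n.-tuple bool).

(* Binary Reed-Muller code RM(r,m) as a set of words of length 2^m,
   following the recursive definition:
   RM(0,m) = {0,1}, RM(m,m) = F_2^(2^m),
   RM(r,m) = {(u, u+v) : u in RM(r,m-1), v in RM(r-1,m-1)} for 1 <= r <= m-1.
   (For r > m we also return the whole space; it is never used.) *)
Fixpoint RM_aux (m : nat) : nat -> {set word (2 ^ m)} :=
  match m return nat -> {set word (2 ^ m)} with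
  | 0 => fun _ => setT
  | m'.+1 => fun r =>
      match r with
      | 0 => [set w : word (2 ^ m'.+1) |
               (val w == nseq (2 ^ m'.+1) false) || (val w == nseq (2 ^ m'.+1) true)]
      | r'.+1 =>
          if m'.+1 <= r'.+1 then setT
          else [set w : word (2 ^ m'.+1) |
                 [exists u : word (2 ^ m'), exists v : word (2 ^ m'),
                    [&& u \in RM_aux m' r'.+1, v \in RM_aux m' r' &
                        val w == val u ++ [seq (p.1 (+) p.2) | p <- zip (val u) (val v)]]]]
      end
  end.

Definition RM (r m : nat) : {set word (2 ^ m)} := RM_aux m r.

Definition mat (t n : nat) := {ffun 'I_t -> word n}.

Definition twt (t n : nat) (v : mat t n) : nat :=
  #|[set j : 'I_n | [exists i : 'I_t, tnth (v i) j]]|.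

Definition msub (t n : nat) (u v : mat t n) : mat t n :=
  [ffun i => [tuple of [seq (p.1 (+) p.2) | p <- zip (val (u i)) (val (v i))]]].

Definition tdist (t n : nat) (u v : mat t n) : nat := twt (msub u v).

Definition inCt (t n : nat) (C : {set word n}) (c : mat t n) : bool :=
  [forall i : 'I_t, c i \in C].

Definition covers (t n : nat) (C : {set word n}) (rho : nat) : bool :=
  [forall v : mat t n, [exists c : mat t n, inCt C c && (tdist v c <= rho)]].

(* The t-th generalized covering radius: the smallest rho with covers rho.
   Computed as the first rho in 0..n with covers rho (for nonempty C,
   rho = n always works, so this is exactly the minimum). *)
Definition Rt (t n : nat) (C : {set word n}) : nat :=
  find (covers t C) (iota 0 n.+1).

Definition Rtrm (t r m : nat) : nat := Rt t (RM r m).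

(* Main.v *)
Require Import Defs.
From mathcomp Require Import all_boot.
From Stdlib Require Import Reals.
From mathcomp Require Import ssrnat.
From mathcomp Require Import all_algebra.
From mathcomp Require Import Rstruct.
From Coquelicot Require Import Coquelicot.
From Stdlib Require Import Lra Lia.
Set Implicit Arguments. Unset Strict Implicit. Unset Printing Implicit Defensive.

Section Comb.
Local Open Scope nat_scope.

Lemma tnth_xor n (u v : word n) j :
  tnth [tuple of [seq p.1 (+) p.2 | p <- zip (val u) (val v)]] j = tnth u j (+) tnth v j.
Proof.
rewrite (tnth_nth false) /= (nth_map (false, false)); last first.
  by rewrite size_zip !size_tuple minnn.
by rewrite nth_zip ?size_tuple // -!tnth_nth.
Qed.

Lemma tnth_msub t n (u v : mat t n) i j : tnth (msub u v i) j = tnth (u i) j (+) tnth (v i) j.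
Proof. by rewrite /msub ffunE tnth_xor. Qed.

Lemma msubK t n (v c : mat t n) : msub (msub v c) c = v.
Proof.
apply/ffunP => i; apply: eq_from_tnth => j.
by rewrite !tnth_msub -addbA addbb addbF.
Qed.

Lemma card_mat t n : #|{: mat t n}| = (2 ^ n) ^ t.
Proof. by rewrite /mat card_ffun card_tuple card_bool card_ord. Qed.

Lemma N1 t n (C : {set word n}) rho : covers t C rho ->
  (2 ^ n) ^ t <= #|C| ^ t * #|[set w : mat t n | (twt w <= rho)%N]|.
Proof.
move=> /forallP cov.
set B0 := [set w : mat t n | (twt w <= rho)%N].
set Ct := [set c : mat t n | inCt C c].
have hCt : #|Ct| = #|C| ^ t.
  rewrite -[in RHS](card_ord t) -card_ffun_on; apply: eq_card => c.
  rewrite [in LHS]inE /inCt; apply/forallP/ffun_onP => h i; exact: h.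
have hB c : #|[set v : mat t n | tdist v c <= rho]| <= #|B0|.
  apply: leq_trans (leq_imset_card (fun w => msub w c) B0).
  apply/subset_leq_card/subsetP => v; rewrite inE => hv.
  apply/imsetP; exists (msub v c); last by rewrite msubK.
  by rewrite inE.
rewrite -card_mat -hCt -[X in X <= _]sum1_card.
apply: (@leq_trans (\sum_v \sum_(c in Ct) (tdist v c <= rho))).
  apply: leq_sum => v _.
  have /existsP [c /andP [hc hd]] := cov v.
  rewrite (bigD1 c) ?inE //= hd; exact: leq_addr.
rewrite exchange_big /= -sum_nat_const.
apply: leq_sum => c _.
apply: leq_trans (hB c).
rewrite -sum1_card [X in _ <= X]big_mkcond /=; apply: leq_sum => v _; rewrite inE; by case: (tdist v c <= rho).
Qed.


Definition K (r m : nat) := \sum_(i < r.+1) 'C(m, i).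

Lemma K_pascal r m : K r.+1 m.+1 = K r.+1 m + K r m.
Proof.
rewrite /K big_ord_recl [in RHS]big_ord_recl !bin0.
under eq_bigr => i _ do rewrite lift0 binS.
by rewrite big_split /= addnA.
Qed.

Lemma K_ge r m : m <= r -> 2 ^ m <= K r m.
Proof.
move=> hmr.
have -> : 2 ^ m = \sum_(i < m.+1) 'C(m, i).
  rewrite -[2]/(1 + 1) expnDn; apply: eq_bigr => i _; by rewrite !exp1n !muln1.
rewrite /K (big_ord_widen r.+1 (fun i => 'C(m, i))) //.
by rewrite [X in _ <= X](bigID (fun i : 'I_r.+1 => i < m.+1)) /= leq_addr.
Qed.

Lemma K0 r : K r 0 = 1.
Proof.
rewrite /K big_ord_recl bin0 big1 // => i _; by rewrite bin0n.
Qed.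

Lemma K0r m : K 0 m = 1.
Proof. by rewrite /K big_ord1 bin0. Qed.

Lemma N2 m r : #|RM_aux m r| <= 2 ^ K r m.
Proof.
elim: m r => [|m IH] r.
  by rewrite /= cardsT card_tuple card_bool K0.
case: r => [|r].
  rewrite K0r /=.
  apply: (@leq_trans #|(fun b => nseq_tuple (2 ^ m.+1) b) @: [set: bool]|).
    apply/subset_leq_card/subsetP => w; rewrite inE => /orP [] /eqP hw;
      apply/imsetP; [exists false | exists true] => //; apply: val_inj; by rewrite /= hw.
  apply: leq_trans (leq_imset_card _ _) _; by rewrite cardsT card_bool.
rewrite /=; case: ifP => hmr.
  by rewrite cardsT card_tuple card_bool leq_exp2l // K_ge.
set w0 := nseq_tuple (2 ^ m.+1) false.
pose h (p : word (2 ^ m) * word (2 ^ m)) : word (2 ^ m.+1) :=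
  insubd w0 (val p.1 ++ [seq (q.1 (+) q.2) | q <- zip (val p.1) (val p.2)]).
apply: (@leq_trans #|h @: (setX (RM_aux m r.+1) (RM_aux m r))|).
  apply/subset_leq_card/subsetP => w; rewrite inE => /existsP [u /existsP [v /and3P [hu hv /eqP hw]]].
  apply/imsetP; exists (u, v); first by rewrite inE hu hv.
  apply: val_inj; rewrite /h val_insubd -hw size_tuple eqxx //.
apply: leq_trans (leq_imset_card _ _) _.
rewrite cardsX K_pascal expnD leq_mul //; exact: IH.
Qed.


Lemma exp_mono a b k : a <= b -> a ^ k <= b ^ k.
Proof. by case: k => [|k] // hab; rewrite leq_exp2r. Qed.

Lemma ffact_le n k : n ^_ k <= n ^ k.
Proof.
elim: k n => [|k IH] n //.
rewrite ffactnS expnS leq_mul //; apply: leq_trans (IH _) _.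
apply: exp_mono; exact: leq_pred.
Qed.

Lemma bin_le m i : 'C(m, i) * i`! <= m ^ i.
Proof. by rewrite bin_ffact ffact_le. Qed.

Lemma K_bound r m : 0 < m -> K r.+1 m <= r.+1 * m ^ r + 'C(m, r.+1).
Proof.
move=> hm; rewrite /K big_ord_recr /= leq_add2r.
apply: leq_trans (_ : \sum_(i < r.+1) m ^ r <= _); last by rewrite sum_nat_const card_ord.
apply: leq_sum => i _.
apply: leq_trans (_ : m ^ i <= _); last by apply: leq_pexp2l => //; rewrite -ltnS.
apply: leq_trans (bin_le m i); by rewrite leq_pmulr // fact_gt0.
Qed.

Lemma pow_le_exp m k : 0 < k -> m ^ k <= k ^ k * 2 ^ m.
Proof.
move=> hk.
set a := m %/ k.
have h1 : m < a.+1 * k by rewrite /a ltn_ceil.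
have h2 : a.+1 <= 2 ^ a by rewrite ltn_expl.
have h3 : a * k <= m by rewrite /a leq_divM.
apply: leq_trans (_ : (a.+1 * k) ^ k <= _); first by apply: exp_mono; exact: ltnW.
rewrite expnMn mulnC leq_mul //.
apply: leq_trans (_ : (2 ^ a) ^ k <= _); first exact: exp_mono.
by rewrite -expnM leq_exp2l.
Qed.


Lemma Rt_spec t n (C : {set word n}) : covers t C (Rt t C) \/ Rt t C = n.+1.
Proof.
rewrite /Rt.
have hsz := find_size (covers t C) (seq.iota 0 n.+1); rewrite size_iota in hsz.
case: (boolP (has (covers t C) (seq.iota 0 n.+1))) => hs.
  left; have hlt := hs; rewrite has_find size_iota in hlt.
  by have := nth_find 0 hs; rewrite nth_iota // add0n.
right; apply/eqP; rewrite eqn_leq hsz /=.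
by move: hs; rewrite has_find size_iota -leqNgt.
Qed.

End Comb.

Section R1.
Import order.Order.TTheory GRing.Theory Num.Theory.
Local Open Scope ring_scope.
Variable R : numDomainType.

Definition trm t n (F : {ffun 'I_n -> {ffun 'I_t -> bool}}) : mat t n :=
  [ffun i => [tuple F j i | j < n]].
Definition trm' t n (w : mat t n) : {ffun 'I_n -> {ffun 'I_t -> bool}} :=
  [ffun j => [ffun i => tnth (w i) j]].

Lemma trmK t n : cancel (@trm t n) (@trm' t n).
Proof. move=> F; apply/ffunP => j; apply/ffunP => i; by rewrite !ffunE tnth_mktuple. Qed.
Lemma trm'K t n : cancel (@trm' t n) (@trm t n).
Proof. move=> w; apply/ffunP => i; apply: eq_from_tnth => j; by rewrite !ffunE tnth_mktuple !ffunE. Qed.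

Lemma twt_trm t n F : twt (@trm t n F) = #|[set j | F j != [ffun => false]]|.
Proof.
rewrite /twt; apply: eq_card => j; rewrite !inE.
apply/existsP/idP => [[i hi]|hj].
  apply/eqP => hF; move: hi; by rewrite ffunE tnth_mktuple hF ffunE.
case: (boolP [exists i, F j i]) => [/existsP [i hi]|/existsPn hn].
  by exists i; rewrite ffunE tnth_mktuple.
case/eqP: hj; apply/ffunP => i; rewrite ffunE; exact: negbTE (hn i).
Qed.

Lemma sum_twt t n (x : R) :
  \sum_(w : mat t n) x ^+ twt w = (1 + (2 ^ t - 1)%N%:R * x) ^+ n.
Proof.
rewrite (reindex (@trm t n)); last by apply: onW_bij; exists (@trm' t n); [exact: trmK | exact: trm'K].
have -> : \sum_(F : {ffun 'I_n -> {ffun 'I_t -> bool}}) x ^+ twt (trm F) =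
   \sum_(F : {ffun 'I_n -> {ffun 'I_t -> bool}}) \prod_(j < n) (if F j != [ffun => false] then x else 1).
  apply: eq_bigr => F _; rewrite twt_trm -prodr_const big_mkcond /=.
  by apply: eq_bigr => j _; rewrite inE.
rewrite -(bigA_distr_bigA (fun (j : 'I_n) (c : {ffun 'I_t -> bool}) => if c != [ffun => false] then x else 1)) /=.
rewrite prodr_const card_ord; congr (_ ^+ _).
rewrite (bigD1 [ffun => false]) //= eqxx; congr (_ + _).
rewrite (eq_bigr (fun _ => x)); last by move=> c ->.
have hc : #|(fun c : {ffun 'I_t -> bool} => c != [ffun => false])| = (2 ^ t - 1)%N.
  have := cardC1 ([ffun => false] : {ffun 'I_t -> bool}).
  rewrite card_ffun card_bool card_ord subn1 => <-; apply: eq_card => c; by rewrite !inE.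
by rewrite sumr_const hc mulr_natl.
Qed.

Lemma R1 t n (rho : nat) (x : R) : 0 <= x -> x <= 1 ->
  #|[set w : mat t n | (twt w <= rho)%N]|%:R * x ^+ rho <= (1 + (2 ^ t - 1)%N%:R * x) ^+ n.
Proof.
move=> h0 h1; rewrite -sum_twt mulr_natl -sumr_const.
apply: le_trans (_ : \sum_(w in [set w : mat t n | (twt w <= rho)%N]) x ^+ twt w <= _).
  apply: ler_sum => w; rewrite inE => hw; exact: ler_wiXn2l.
rewrite [X in _ <= X](bigID (mem [set w : mat t n | (twt w <= rho)%N])) /= lerDl.
by apply: sumr_ge0 => w _; exact: exprn_ge0.
Qed.

End R1.

Section Ana.
Local Open Scope R_scope.

Lemma INR_expn a b : INR (a ^ b)%N = INR a ^ b.
Proof. elim: b => [|b IH]; first by rewrite expn0. rewrite expnS mult_INR IH /=. ring. Qed.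

Lemma INR_subn a b : (b <= a)%N -> INR (a - b)%N = INR a - INR b.
Proof. move/leP => h; exact: minus_INR. Qed.

Lemma R1' t n (rho : nat) (x : R) : 0 <= x -> x <= 1 ->
  INR #|[set w : mat t n | (twt w <= rho)%N]| * x ^ rho <= (1 + INR (2 ^ t - 1)%N * x) ^ n.
Proof.
move=> h0 h1.
have := @R1 R t n rho x; rewrite -!RpowE -!INRE => H.
apply/RleP; apply: H; exact/RleP.
Qed.

Lemma L1 x : 0 <= x -> exp x <= 1 + x + x^2 * exp x / 2.
Proof.
intros hx.
destruct (Req_dec x 0) as [->|hx0]. { rewrite exp_0; lra. }
assert (hd : forall c, 0 <= c -> c <= x -> derivable_pt_lim (fun y => exp (-y) * (1+y) + y^2/2 - 1) c (c - c * exp (-c))).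
{ intros c _ _. apply is_derive_Reals. auto_derive; [easy|field]. }
destruct (MVT_cor3 _ _ 0 x ltac:(lra) hd) as [c [h1 [h2 h3]]].
assert (0 <= c - c * exp (-c)).
{ assert (exp (-c) <= 1). { rewrite -exp_0. destruct (Rle_lt_or_eq_dec 0 c h1) as [hc|hc]. { left. apply exp_increasing. lra. } { subst c. rewrite Ropp_0. lra. } }
  nra. }
assert (h4 : 0 <= exp (-x) * (1 + x) + x ^ 2 / 2 - 1).
{ rewrite h3. rewrite Ropp_0 exp_0. nra. }
assert (h5 : exp x * exp (-x) = 1). { rewrite -exp_plus. replace (x + -x) with 0 by ring. apply exp_0. }
assert (h6 : 0 < exp x) by apply exp_pos.
assert (h7: 0 <= exp x * (exp (-x) * (1 + x) + x ^ 2 / 2 - 1)) by (apply Rmult_le_pos; lra).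
replace (exp x * (exp (-x) * (1 + x) + x ^ 2 / 2 - 1)) with ((exp x * exp (-x)) * (1 + x) + x^2 * exp x / 2 - exp x) in h7 by field.
rewrite h5 in h7. lra.
Qed.
Lemma L2 x : x <= 0 -> exp x <= 1 + x + x^2 / 2.
Proof.
intros hx.
destruct (Req_dec x 0) as [->|hx0]. { rewrite exp_0; lra. }
assert (hd : forall c, x <= c -> c <= 0 -> derivable_pt_lim (fun y => 1 + y + y^2/2 - exp y) c (1 + c - exp c)).
{ intros c _ _. apply is_derive_Reals. auto_derive; [easy|field]. }
destruct (MVT_cor3 _ _ x 0 ltac:(lra) hd) as [c [h1 [h2 h3]]].
pose proof (exp_ineq1_le c). rewrite exp_0 in h3.
nra. Qed.


Lemma partB (N s : R) : 1 <= N -> 0 <= s ->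
  let q := / N in let p := 1 - q in
  ln (1 + (N - 1) * exp (- s)) <= ln N - p * s + p * q * s ^ 2 * (p * exp (p * s) + q) / 2.
Proof.
move=> hN hs q p.
have hq0 : 0 < q by apply: Rinv_0_lt_compat; lra.
have hq1 : q <= 1 by rewrite /q -Rinv_1; apply: Rinv_le_contravar; lra.
have hp0 : 0 <= p by rewrite /p; lra.
have h1 := @L1 (p * s) ltac:(nra).
have h2 := @L2 (- (q * s)) ltac:(nra).
set e1 := exp (p * s) in h1 *.
set e2 := exp (- (q * s)) in h2 *.
have E : q * e1 + p * e2 <= 1 + p * q * s ^ 2 * (p * e1 + q) / 2.
  have h1' : q * e1 <= q * (1 + p * s + (p * s) ^ 2 * e1 / 2) by apply: Rmult_le_compat_l; lra.
  have h2' : p * e2 <= p * (1 + - (q * s) + (- (q * s)) ^ 2 / 2) by apply: Rmult_le_compat_l; lra.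
  have -> : 1 + p * q * s ^ 2 * (p * e1 + q) / 2 =
     q * (1 + p * s + (p * s) ^ 2 * e1 / 2) + p * (1 + - (q * s) + (- (q * s)) ^ 2 / 2)
     by rewrite /p; field.
  lra.
have he1 : 0 < e1 by apply: exp_pos.
have he2 : 0 < e2 by apply: exp_pos.
have Y0 : 0 < q * e1 + p * e2 by nra.
have hdec : 1 + (N - 1) * exp (- s) = N * exp (- (p * s)) * (q * e1 + p * e2).
  have k1 : exp (- (p * s)) * e1 = 1 by rewrite /e1 -exp_plus; replace (- (p * s) + p * s) with 0 by ring; exact: exp_0.
  have k2 : exp (- (p * s)) * e2 = exp (- s) by rewrite /e2 -exp_plus /p; congr exp; ring.
  have k3 : N * q = 1 by rewrite /q; field; lra.
  have -> : N * exp (- (p * s)) * (q * e1 + p * e2) = (N * q) * (exp (- (p * s)) * e1) + N * p * (exp (- (p * s)) * e2) by ring.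
  rewrite k1 k2 k3 /p; have -> : N * (1 - q) = N - N * q by ring.
  rewrite k3; ring.
rewrite hdec ln_mult; last by [].
  rewrite ln_mult ?ln_exp; last first.
  - exact: exp_pos.
  - lra.
  have : ln (q * e1 + p * e2) <= p * q * s ^ 2 * (p * e1 + q) / 2.
    rewrite -[X in _ <= X]ln_exp; apply: ln_le => //.
    apply: Rle_trans E _; exact: exp_ineq1_le.
  lra.
apply: Rmult_lt_0_compat; [lra | exact: exp_pos].
Qed.


Lemma INR2 : INR 2 = 2.
Proof. by rewrite /= ; ring. Qed.

Lemma INR_pow2 k : INR (2 ^ k)%N = 2 ^ k.
Proof. by rewrite INR_expn INR2. Qed.

Lemma partA t r m (rho : nat) (s : R) : covers t (RM r m) rho -> 0 <= s ->
  INR (2 ^ m)%N * INR t * ln 2 - INR rho * s <=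
  INR (K r m) * INR t * ln 2 + INR (2 ^ m)%N * ln (1 + (2 ^ t - 1) * exp (- s)).
Proof.
move=> cov hs.
set n := (2 ^ m)%N.
set B0 := [set w : mat t n | (twt w <= rho)%N].
have hnat : ((2 ^ n) ^ t <= (2 ^ K r m) ^ t * #|B0|)%N.
  apply: leq_trans (N1 cov) _; rewrite leq_mul //; apply: exp_mono; exact: N2.
have hR : INR ((2 ^ n) ^ t)%N <= INR ((2 ^ K r m) ^ t)%N * INR #|B0|.
  rewrite -mult_INR; apply: le_INR; exact/leP.
set l := exp (- s).
have hl0 : 0 < l by apply: exp_pos.
have hl1 : l <= 1 by rewrite /l -exp_0; case: (Rle_lt_or_eq_dec 0 s hs) => h;
  [left; apply: exp_increasing; lra | rewrite -h Ropp_0; lra].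
have h2 := @R1' t n rho l (Rlt_le _ _ hl0) hl1.
have ht1 : INR (2 ^ t - 1)%N = 2 ^ t - 1.
  rewrite INR_subn ?INR_pow2 //; exact: expn_gt0.
rewrite ht1 in h2.
have hpos1 : 0 < 1 + (2 ^ t - 1) * l.
  have : 1 <= 2 ^ t by rewrite -INR_pow2; apply: (le_INR 1); apply/leP; exact: expn_gt0.
  nra.
have h3 : INR ((2 ^ n) ^ t)%N * l ^ rho <= INR ((2 ^ K r m) ^ t)%N * (1 + (2 ^ t - 1) * l) ^ n.
  apply: Rle_trans (_ : INR ((2 ^ K r m) ^ t)%N * INR #|B0| * l ^ rho <= _).
    apply: Rmult_le_compat_r => //; apply: pow_le; lra.
  rewrite Rmult_assoc; apply: Rmult_le_compat_l => //; exact: pos_INR.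
have hA : 0 < INR ((2 ^ n) ^ t)%N by apply: lt_0_INR; apply/ltP; rewrite !expn_gt0.
have hB : 0 < INR ((2 ^ K r m) ^ t)%N by apply: lt_0_INR; apply/ltP; rewrite !expn_gt0.
have := ln_le _ _ (Rmult_lt_0_compat _ _ hA (pow_lt _ rho hl0)) h3.
rewrite !ln_mult //; last 2 first.
- exact: pow_lt.
- exact: pow_lt.
rewrite !INR_expn !INR2 !ln_pow //; try lra; try (apply: pow_lt; lra).
rewrite /l ln_exp.
rewrite /n ?INR_pow2 => H.
nra.
Qed.


Lemma Un_cv_ext (u v : nat -> R) l l' : (forall n, u n = v n) -> l = l' -> Un_cv u l -> Un_cv v l'.
Proof. move=> huv <- h e he; have [N hN] := h e he; exists N => n hn; rewrite -huv; exact: hN. Qed.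

Lemma Un_cv_cst k : Un_cv (fun _ => k) k.
Proof. move=> e he; exists 0%N => n _; rewrite /R_dist Rminus_diag Rabs_R0; exact: he. Qed.

Lemma cv0_bound (u : nat -> R) E : 0 <= E ->
  (forall m, (1 <= m)%N -> 0 <= u m <= E / INR m) -> Un_cv u 0.
Proof.
move=> hE hu e he.
have [N hN] := INR_unbounded (E / e).
exists (N.+1) => m hm.
have hm1 : (1 <= m)%N by apply/leP; lia.
have hmN : INR N < INR m by apply: lt_INR; lia.
have hm0 : 0 < INR m by apply: lt_0_INR; lia.
have [h0 h1] := hu m hm1.
rewrite /R_dist Rminus_0_r Rabs_right; last lra.
apply: Rle_lt_trans h1 _.
apply: (Rmult_lt_reg_r (INR m)) => //.
rewrite /Rdiv Rmult_assoc Rinv_l; last lra.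
rewrite Rmult_1_r.
have : E / e < INR m by lra.
move=> h; have := Rmult_lt_compat_r e _ _ he h.
rewrite /Rdiv Rmult_assoc Rinv_l; last lra.
lra.
Qed.

End Ana.

Section Final.
Local Open Scope R_scope.

Lemma Kb r m : (1 <= r)%N -> (1 <= m)%N ->
  INR (K r m) <= INR m ^ r / INR (factorial r) + INR r * INR m ^ (r - 1).
Proof.
case: r => [|r] // _ hm.
have h := K_bound r hm.
have hb := bin_le m r.+1.
have hf : 0 < INR (r.+1)`! by apply: lt_0_INR; apply/ltP; exact: fact_gt0.
have hb' : INR 'C(m, r.+1) <= INR m ^ r.+1 / INR (r.+1)`!.
  apply: (Rmult_le_reg_r (INR (r.+1)`!)) => //.
  rewrite /Rdiv Rmult_assoc Rinv_l ?Rmult_1_r; last lra.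
  rewrite -mult_INR -INR_expn; apply: le_INR; exact/leP.
have h' : INR (K r.+1 m) <= INR (r.+1 * m ^ r)%N + INR 'C(m, r.+1).
  rewrite -plus_INR; apply: le_INR; exact/leP.
rewrite mult_INR INR_expn in h'.
have -> : (r.+1 - 1)%N = r by rewrite subn1.
lra.
Qed.

Theorem theorem12 (t r : nat) (ht : leq 1 t) (hr : leq 1 r) :
  exists eps : nat -> R, Un_cv eps 0 /\
    forall m : nat, leq r m ->
      INR (Rtrm t r m) >=
        (1 - 1 / 2 ^ t) * 2 ^ m
        - sqrt (2 * INR t * (2 ^ t - 1) * ln 2) / (2 ^ t * sqrt (INR (factorial r)))
          * (sqrt (INR m)) ^ r * sqrt (2 ^ m) * (1 + eps m).
Proof.
pose N := 2 ^ t.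
pose q := / N.
pose p := 1 - q.
pose c := sqrt (2 * INR t * (2 ^ t - 1) * ln 2) / (2 ^ t * sqrt (INR (factorial r))).
pose T := fun m : nat => c * sqrt (INR m) ^ r * sqrt (2 ^ m).
pose s := fun m : nat => T m / (2 ^ m * (p * q)).
pose eps := fun m : nat => (INR r * INR (factorial r) / INR m + p * (exp (p * s m) - 1)) / 2.
have hN : 2 <= N.
  rewrite /N -INR_pow2 -INR2; apply: le_INR; apply/leP.
  by rewrite -[X in (X <= _)%N]expn1 leq_exp2l.
have hq0 : 0 < q by rewrite /q; apply: Rinv_0_lt_compat; lra.
have hq1 : q <= / 2 by rewrite /q; apply: Rinv_le_contravar; lra.
have hp0 : / 2 <= p by rewrite /p; lra.
have hpq : 0 < p * q by nra.
have hln2 : 0 < ln 2 by have := ln_lt_2; lra.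
have ht0 : 1 <= INR t by apply: (le_INR 1); exact/leP.
have hf : 0 < INR (factorial r) by apply: lt_0_INR; apply/ltP; exact: fact_gt0.
have hc : 0 < c.
  rewrite /c; apply: Rdiv_lt_0_compat.
    apply: sqrt_lt_R0; rewrite -/N; apply: Rmult_lt_0_compat => //; nra.
  apply: Rmult_lt_0_compat; [rewrite -/N; lra | exact: sqrt_lt_R0].
have hT0 : forall m, 0 <= T m.
  move=> m; rewrite /T; apply: Rmult_le_pos; [apply: Rmult_le_pos; [lra|] | exact: sqrt_pos].
  apply: pow_le; exact: sqrt_pos.
have hs0 : forall m, 0 <= s m.
  move=> m; rewrite /s; apply: Rdiv_le_0_compat => //; apply: Rmult_lt_0_compat => //; apply: pow_lt; lra.
have heps0 : forall m, 0 <= eps m.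
  move=> m; rewrite /eps.
  have : 1 <= exp (p * s m).
    have := exp_ineq1_le (p * s m); have := hs0 m; nra.
  have : 0 <= INR r * INR (factorial r) / INR m.
    apply: Rmult_le_pos; [apply: Rmult_le_pos; [exact: pos_INR | lra]|].
    case: m => [|m]; first by rewrite /= Rinv_0; lra.
    left; apply: Rinv_0_lt_compat; apply: lt_0_INR; lia.
  nra.
exists eps; split.
  have CVa : Un_cv (fun m => INR r * INR (factorial r) / INR m) 0.
    apply: (@cv0_bound _ (INR r * INR (factorial r))).
      apply: Rmult_le_pos; [exact: pos_INR | lra].
    move=> m hm; split; last lra.
    apply: Rmult_le_pos; [apply: Rmult_le_pos; [exact: pos_INR | lra]|].
    left; apply: Rinv_0_lt_compat; apply: lt_0_INR; apply/leP; exact: hm.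
  pose D := INR ((r.+1) ^ r.+1)%N.
  have hD : 0 <= D by exact: pos_INR.
  have CVs2 : Un_cv (fun m => s m ^ 2) 0.
    apply: (@cv0_bound _ ((c / (p * q)) ^ 2 * D)).
      apply: Rmult_le_pos => //; apply: pow2_ge_0.
    move=> m hm; split; first exact: pow2_ge_0.
    have hm0 : 0 < INR m by apply: lt_0_INR; apply/leP; exact: hm.
    have hn : 0 < 2 ^ m by apply: pow_lt; lra.
    have hsq : s m ^ 2 = (c / (p * q)) ^ 2 * (INR m ^ r / 2 ^ m).
      rewrite /s /T.
      have hsm : sqrt (INR m) ^ r * sqrt (INR m) ^ r = INR m ^ r.
        rewrite -Rpow_mult_distr sqrt_sqrt //; exact: pos_INR.
      have hsn : sqrt (2 ^ m) * sqrt (2 ^ m) = 2 ^ m by rewrite sqrt_sqrt //; lra.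
      have -> : (c * sqrt (INR m) ^ r * sqrt (2 ^ m) / (2 ^ m * (p * q))) ^ 2 =
        c ^ 2 * (sqrt (INR m) ^ r * sqrt (INR m) ^ r) * (sqrt (2 ^ m) * sqrt (2 ^ m)) / (2 ^ m * 2 ^ m * (p * q) ^ 2).
        field; split; lra.
      rewrite hsm hsn; field; split; lra.
    rewrite hsq /Rdiv Rmult_assoc; apply: Rmult_le_compat_l; first exact: pow2_ge_0.
    have hb := pow_le_exp m (ltn0Sn r).
    have hb' : INR m ^ r.+1 <= D * 2 ^ m.
      rewrite -INR_expn -INR_pow2 /D -mult_INR; apply: le_INR; exact/leP.
    apply: (Rmult_le_reg_r (INR m * 2 ^ m)); first nra.
    have -> : INR m ^ r * / 2 ^ m * (INR m * 2 ^ m) = INR m ^ r.+1 by rewrite /=; field; lra.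
    have -> : D * / INR m * (INR m * 2 ^ m) = D * 2 ^ m by field; lra.
    exact: hb'.
  have CVs : Un_cv s 0.
    have := continuity_seq sqrt _ 0 (continuity_pt_sqrt 0 (Rle_refl 0)) CVs2.
    apply: Un_cv_ext; last exact: sqrt_0.
    move=> m; exact: sqrt_pow2.
  have CVe := continuity_seq exp _ _ (derivable_continuous_pt _ _ (derivable_pt_exp _)) (CV_mult _ _ _ _ (Un_cv_cst p) CVs).
  have := CV_mult _ _ _ _ (CV_plus _ _ _ _ CVa (CV_mult _ _ _ _ (Un_cv_cst p) (CV_minus _ _ _ _ CVe (Un_cv_cst 1)))) (Un_cv_cst (/ 2)).
  apply: Un_cv_ext => [m|]; first by [].
  rewrite Rmult_0_r exp_0; ring.
move=> m hm.
have hm1 : (1 <= m)%N by apply: leq_trans hm.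
have hmR : 1 <= INR m by apply: (le_INR 1); exact/leP.
have hn : 0 < 2 ^ m by apply: pow_lt; lra.
have -> : 1 - 1 / 2 ^ t = p by rewrite /p /q /N /Rdiv Rmult_1_l.
rewrite -/c -/(T m).
apply: Rle_ge.
have hTpos : 0 < T m.
  rewrite /T; apply: Rmult_lt_0_compat; [apply: Rmult_lt_0_compat => //|].
    apply: pow_lt; apply: sqrt_lt_R0; lra.
  apply: sqrt_lt_R0; lra.
have hSpos : 0 < s m by rewrite /s; apply: Rdiv_lt_0_compat => //; apply: Rmult_lt_0_compat.
have he := heps0 m.
case: (Rt_spec t (RM r m)) => [cov|heq]; last first.
  rewrite /Rtrm heq S_INR INR_pow2.
  have : 0 <= T m * (1 + eps m) by apply: Rmult_le_pos; lra.
  have : p <= 1 by rewrite /p; lra.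
  nra.
set rho := Rt t (RM r m).
have hA := partA cov (Rlt_le _ _ hSpos).
have hB := @partB N (s m) ltac:(lra) (Rlt_le _ _ hSpos).
cbv zeta in hB; rewrite -/q -/p in hB; rewrite -/rho in hA.
rewrite INR_pow2 in hA.
rewrite -/N in hA.
have hlnN : ln N = INR t * ln 2 by rewrite /N ln_pow; lra.
rewrite hlnN in hB.
set L := ln (1 + (N - 1) * exp (- s m)) in hA hB.
set E := exp (p * s m) in hB *.
set S := s m in hA hB hSpos *.
set TT := T m in hTpos *.
set n := 2 ^ m in hA hn *.
have hB' := Rmult_le_compat_l n _ _ (Rlt_le _ _ hn) hB.
have h1 : (n * p - INR rho) * S <= INR (K r m) * INR t * ln 2 + n * (p * q) * S * S * (p * E + q) / 2.
  have -> : n * (p * q) * S * S * (p * E + q) / 2 = n * (p * q * S ^ 2 * (p * E + q) / 2) by field.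
  nra.
have hS : n * (p * q) * S = TT.
  rewrite /S /s /TT /n; field; split; [lra|split; [lra|apply: pow_nonzero; lra]].
rewrite hS in h1.
have hK := Kb hr hm1.
set X := INR m ^ r / INR (factorial r) in hK.
set e1 := INR r * INR (factorial r) / INR m.
have hXe : X * e1 = INR r * INR m ^ (r - 1).
  rewrite /X /e1.
  have -> : INR m ^ r = INR m * INR m ^ (r - 1).
    by rewrite -(prednK hr) /= subn1 /=.
  field; split; lra.
have hK' : INR (K r m) * INR t * ln 2 <= (X + X * e1) * INR t * ln 2.
  rewrite hXe; apply: Rmult_le_compat_r; [lra|]; apply: Rmult_le_compat_r; lra.
have hX : X * INR t * ln 2 = TT * S / 2.
  have hS' : S = TT / (n * (p * q)) by [].
  have hsm : sqrt (INR m) ^ r * sqrt (INR m) ^ r = INR m ^ r.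
    rewrite -Rpow_mult_distr sqrt_sqrt //; exact: pos_INR.
  have hsn : sqrt n * sqrt n = n by rewrite sqrt_sqrt //; lra.
  have hTT : TT * TT = c * c * INR m ^ r * n.
    rewrite -hsm -hsn /TT /T -/n; ring.
  have hc2 : c * c = 2 * INR t * (N - 1) * ln 2 / (N * N * INR (factorial r)).
    rewrite /c -/N.
    have -> : sqrt (2 * INR t * (N - 1) * ln 2) / (N * sqrt (INR r`!)) *
      (sqrt (2 * INR t * (N - 1) * ln 2) / (N * sqrt (INR r`!))) =
      (sqrt (2 * INR t * (N - 1) * ln 2) * sqrt (2 * INR t * (N - 1) * ln 2)) /
      (N * N * (sqrt (INR r`!) * sqrt (INR r`!))).
      field; split; [apply: Rgt_not_eq; apply: sqrt_lt_R0 => //| lra].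
    rewrite !sqrt_sqrt //; [lra | apply: Rmult_le_pos; [apply: Rmult_le_pos; [apply: Rmult_le_pos|]|]; lra].
  rewrite hS'.
  have -> : TT * (TT / (n * (p * q))) / 2 = TT * TT / (2 * n * (p * q)) by field; split; lra.
  rewrite hTT hc2 /X /p /q.
  field; repeat split; try lra.
have h2 : (n * p - INR rho) * S <= S * (TT * (1 + e1 + p * E + q) / 2).
  have -> : S * (TT * (1 + e1 + p * E + q) / 2) = (X + X * e1) * INR t * ln 2 - (X + X * e1) * INR t * ln 2 + (1 + e1) * (TT * S / 2) + TT * S * (p * E + q) / 2 by field.
  rewrite -hX.
  have -> : (X + X * e1) * INR t * ln 2 - (X + X * e1) * INR t * ln 2 + (1 + e1) * (X * INR t * ln 2) = (X + X * e1) * INR t * ln 2 by ring.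
  lra.
have h3 : n * p - INR rho <= TT * (1 + e1 + p * E + q) / 2.
  apply: (Rmult_le_reg_r S) => //; lra.
have -> : eps m = (e1 + p * (E - 1)) / 2 by [].
have : q = 1 - p by rewrite /p; ring.
move=> hq.
have -> : TT * (1 + (e1 + p * (E - 1)) / 2) = TT * (1 + e1 + p * E + q) / 2 by rewrite hq; field.
rewrite /Rtrm -/rho; lra.
Qed.

End Final.
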